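(* Let $\mathrm{cleaf}_2:\mathbb{R}\to\mathbb{R}$ be the leaf function of basis $2$. For every real $l$ with $c:=\mathrm{cleaf}_2(l)\neq-1$, $$\Bigl(\mathrm{cleaf}_2\Bigl(\frac l2\Bigr)\Bigr)^2=\frac{-1+c+\sqrt2\sqrt{1+c^2}}{1+c}.$$
   Context: For a natural number $n$, the leaf function $\mathrm{cleaf}_n:\mathbb{R}\to\mathbb{R}$ is the solution of $\frac{\mathrm{d}^2r}{\mathrm{d}l^2}=-n\,r^{2n-1}$ with $r(0)=1$, $r'(0)=0$. *)

(* Defs.v *)
From Stdlib Require Import Reals.
From Coquelicot Require Import Coquelicot.
Open Scope R_scope.

(* [is_cleaf n r] : r : R -> R is a (global, twice differentiable) solution of
   r'' = - n r^(2n-1), r(0) = 1, r'(0) = 0, i.e. r is the leaf function cleaf_n.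
   r' denotes the derivative of r. *)
Definition is_cleaf (n : nat) (r : R -> R) : Prop :=
  exists r' : R -> R,
    (forall l, is_derive r l (r' l)) /\
    (forall l, is_derive r' l (- INR n * r l ^ (2 * n - 1))) /\
    r 0 = 1 /\ r' 0 = 0.

(* Main.v *)
Require Import Defs.
From Stdlib Require Import Reals Lra.
From Coquelicot Require Import Coquelicot.
Open Scope R_scope.
Lemma const_of_deriv0 (f : R -> R) : (forall t, is_derive f t 0) -> forall x y, f x = f y.
Proof.
  intros H x y. destruct (Rtotal_order x y) as [h|[h|h]].
  - apply eq_is_derive; [intros t _; apply H | exact h].
  - subst; reflexivity.
  - symmetry; apply eq_is_derive; [intros t _; apply H | exact h].
Qed.

Lemma energy r r' : (forall l, is_derive r l (r' l)) ->
    (forall l, is_derive r' l (- INR 2 * r l ^ (2 * 2 - 1))) ->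
    r 0 = 1 -> r' 0 = 0 -> forall t, r' t ^ 2 = 1 - r t ^ 4.
Proof.
  intros H1 H2 H3 H4 t.
  assert (C := const_of_deriv0 (fun t => r' t ^ 2 + r t ^ 4)).
  assert (D: forall u, is_derive (fun t => r' t ^ 2 + r t ^ 4) u 0).
  { intro u. auto_derive.
    - split; [eexists; apply H2 | split; [eexists; apply H1|exact I]].
    - replace (Derive (fun x => r x) u) with (r' u) by (symmetry; apply is_derive_unique; apply H1).
      replace (Derive (fun x => r' x) u) with (- INR 2 * r u ^ (2 * 2 - 1)) by (symmetry; apply is_derive_unique; apply H2).
      simpl; ring. }
  pose proof (C D t 0) as e. simpl in e. rewrite H3, H4 in e. lra.
Qed.

Lemma cert a p b q : p ^ 2 = 1 - a ^ 4 -> q ^ 2 = 1 - b ^ 4 ->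
  let N := a*b*(1+a^2)*(1+b^2) - p*q in
  let D := (1+a^2)*(1+b^2) + a*b*p*q in
  let Nd := p*b*(1+a^2)*(1+b^2) + a*(-q)*(1+a^2)*(1+b^2) + a*b*(2*a*p)*(1+b^2) + a*b*(1+a^2)*(2*b*(-q))
            - ((-2*a^3)*q + p*(2*b^3)) in
  let Dd := (2*a*p)*(1+b^2) + (1+a^2)*(2*b*(-q)) + p*b*p*q + a*(-q)*p*q + a*b*(-2*a^3)*q + a*b*p*(2*b^3) in
  Nd * D - N * Dd = 0.
Proof.
  intros hp hq N D Nd Dd.
  assert (E : Nd * D - N * Dd =
    (2*a*b^2*q + 2*a^3*b^2*q + 2*a^3*b^4*q + 2*a*q + p*b*q^2 - a*q^3) * (p^2 - 1 + a^4)
    + (-2*a^2*p*b - 2*a^2*p*b^3 - 2*a^4*p*b^3 - p*b - a^4*p*b - a*q + a^5*q) * (q^2 - 1 + b^4)).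
  { unfold N, D, Nd, Dd; ring. }
  rewrite E, hp, hq; ring.
Qed.

Lemma Dpos a p b q : p ^ 2 = 1 - a ^ 4 -> q ^ 2 = 1 - b ^ 4 ->
  0 < (1+a^2)*(1+b^2) + a*b*p*q.
Proof.
  intros hp hq.
  assert (ha : (a*p)^2 <= (1+a^2)^2/4).
  { replace ((a*p)^2) with (a^2*p^2) by ring. rewrite hp. nra. }
  assert (hb : (b*q)^2 <= (1+b^2)^2/4).
  { replace ((b*q)^2) with (b^2*q^2) by ring. rewrite hq. nra. }
  set (X := (1+a^2)*(1+b^2)).
  assert (hX : 1 <= X) by (unfold X; nra).
  assert (h : (a*b*p*q)^2 <= X^2/16).
  { replace ((a*b*p*q)^2) with ((a*p)^2*(b*q)^2) by ring.
    replace (X^2/16) with (((1+a^2)^2/4)*((1+b^2)^2/4)) by (unfold X; field).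
    apply Rmult_le_compat; try nra. }
  nra.
Qed.

Theorem mainTheorem13 :
  forall r : R -> R, is_cleaf 2 r ->
  forall l : R, r l <> -1 ->
  (r (l / 2)) ^ 2 = (-1 + r l + sqrt 2 * sqrt (1 + (r l) ^ 2)) / (1 + r l).
Proof.
  intros r [r' [H1 [H2 [H3 H4]]]] l Hl.
  pose proof (energy r r' H1 H2 H3 H4) as En.
  set (F := fun t => (r t * r (l - t) * (1 + r t ^2) * (1 + r (l-t)^2) - r' t * r' (l-t)) /
                     ((1+r t^2)*(1+r (l-t)^2) + r t * r (l-t) * r' t * r' (l-t))).
  assert (DF : forall u, is_derive F u 0).
  { intro u. unfold F. auto_derive.
    - pose proof (Dpos (r u) (r' u) (r (l + - u)) (r' (l + - u)) (En u) (En _)) as hD.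
      repeat split; try (eexists; apply H1); try (eexists; apply H2).
      intro h; apply (Rlt_not_eq _ _ hD); rewrite <- h; ring.
    - pose proof (Dpos (r u) (r' u) (r (l + - u)) (r' (l + - u)) (En u) (En _)) as hD.
      pose proof (cert (r u) (r' u) (r (l + - u)) (r' (l + - u)) (En u) (En _)) as C.
      cbv zeta in C.
      replace (Derive (fun x => r x) u) with (r' u) by (symmetry; apply is_derive_unique; apply H1).
      replace (Derive (fun x => r x) (l + - u)) with (r' (l + - u)) by (symmetry; apply is_derive_unique; apply H1).
      replace (Derive (fun x => r' x) u) with (- INR 2 * r u ^ (2 * 2 - 1)) by (symmetry; apply is_derive_unique; apply H2).
      replace (Derive (fun x => r' x) (l + - u)) with (- INR 2 * r (l + - u) ^ (2 * 2 - 1)) by (symmetry; apply is_derive_unique; apply H2).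
      replace (INR 2) with 2 by (simpl; ring).
      replace (2 * 2 - 1)%nat with 3%nat by reflexivity.
      set (a := r u) in *. set (b := r (l + - u)) in *. set (p := r' u) in *. set (q := r' (l + - u)) in *.
      set (D := (1+a^2)*(1+b^2) + a*b*p*q) in *.
      transitivity (((p*b*(1+a^2)*(1+b^2) + a*(-q)*(1+a^2)*(1+b^2) + a*b*(2*a*p)*(1+b^2) + a*b*(1+a^2)*(2*b*(-q))
            - ((-2*a^3)*q + p*(2*b^3))) * D - (a*b*(1+a^2)*(1+b^2) - p*q) * ((2*a*p)*(1+b^2) + (1+a^2)*(2*b*(-q)) + p*b*p*q + a*(-q)*p*q + a*b*(-2*a^3)*q + a*b*p*(2*b^3))) / D^2).
      + unfold D; field. apply Rgt_not_eq; exact hD.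
      + fold D in C. rewrite C. unfold Rdiv; ring. }
  pose proof (const_of_deriv0 F DF 0 (l/2)) as e. unfold F in e.
  replace (l - 0) with l in e by ring. replace (l - l/2) with (l/2) in e by field.
  rewrite H3, H4 in e.
  pose proof (En l) as El. pose proof (En (l/2)) as Es.
  pose proof (Dpos (r (l/2)) (r' (l/2)) (r (l/2)) (r' (l/2)) Es Es) as hD.
  set (c := r l) in *. set (s := r (l/2)) in *. set (s' := r' (l/2)) in *.
  assert (hc4 : c^4 <= 1) by (pose proof (pow2_ge_0 (r' l)); lra).
  assert (hc2 : c^2 <= 1) by nra.
  assert (hc : -1 < c).
  { assert (c <> -1) by exact Hl. nra. }
  assert (hc1 : c <= 1) by nra.
  assert (e0 : (1 * c * (1 + 1 ^ 2) * (1 + c ^ 2) - 0 * r' l) / ((1 + 1 ^ 2) * (1 + c ^ 2) + 1 * c * 0 * r' l) = c)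
    by (field; nra).
  rewrite e0 in e. clear e0.
  set (D := (1 + s ^ 2) * (1 + s ^ 2) + s * s * s' * s') in *.
  assert (e1 : c * D = s * s * (1 + s ^ 2) * (1 + s ^ 2) - s' * s').
  { rewrite e. field. apply Rgt_not_eq; exact hD. }
  set (x := s ^ 2).
  assert (hx : 0 <= x) by (unfold x; nra).
  assert (e2 : (1+x)*(c*(1+2*x-x^2) - (x^2+2*x-1)) = 0).
  { replace ((1+x)*(c*(1+2*x-x^2) - (x^2+2*x-1))) with
      ((c * D - (s * s * (1 + s ^ 2) * (1 + s ^ 2) - s' * s')) - (s'^2 - (1-x^2))*(c*x+1))
      by (unfold D, x; ring).
    rewrite e1. unfold x. rewrite Es. ring. }
  assert (e3 : c*(1+2*x-x^2) - (x^2+2*x-1) = 0).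
  { destruct (Rmult_integral _ _ e2) as [h|h]; [lra|exact h]. }
  assert (hy : sqrt 2 * sqrt (1 + c^2) = (1+c)*x + 1 - c).
  { rewrite <- sqrt_mult by nra. apply sqrt_lem_1; try nra. }
  fold x. rewrite hy. field. lra.
Qed.
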